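(* Let $G=(V,E)$ be a graph on $V=\{1,\dots,N\}$, let $\mathcal L\subseteq\{1,\dots,N\}$ be a set of lost qubits, let $\rho$ be the post-loss state defined in the context, and let $G'=G[V\setminus\mathcal L]$. Let $r$ be a root of $G$ (a vertex of degree $n_{\max}=n_{\max}(G)$) with $r\notin\mathcal L$. Define $$\mathcal W^{G}=\mathcal N_r^{G}\setminus\bigcup_{l\in\mathcal L}\overline{\mathcal N_l^{G}},\qquad \mathcal T^{G}=\{1,\dots,N\}\setminus\Big(\bigcup_{l\in\mathcal L}\overline{\mathcal N_l^{G}}\cup\overline{\mathcal N_r^{G}}\Big).$$ Then $$\langle I_r^{G*}\rangle_\rho=\langle I_r^{G'*}\rangle_\rho=\begin{cases}\sqrt2\,n_{\max}+\sqrt2\,|\mathcal W^{G}|+|\mathcal T^{G}| & \text{if } \overline{\mathcal N_r^{G}}\cap\mathcal L=\emptyset,\\[2pt] \sqrt2\,|\mathcal W^{G}|+|\mathcal T^{G}| & \text{otherwise.}\end{cases}$$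
   Context: Qubits are labelled $1,\dots,N$; $X_i,Z_i$ denote the Pauli $X$ and $Z$ operators acting on qubit $i$ (identity on all other qubits). For a simple undirected graph $H$ with vertex set $V(H)\subseteq\{1,\dots,N\}$, $\mathcal N_i^H$ is the set of neighbours of $i$ in $H$, $\overline{\mathcal N_i^H}=\mathcal N_i^H\cup\{i\}$, and $n_{\max}(H)$ is the maximum degree of $H$; a root of $H$ is a vertex of degree $n_{\max}(H)$. The stabilizer of vertex $i$ in $H$ is $S_i^H=X_i\prod_{j\in\mathcal N_i^H}Z_j$. For $G=(V,E)$ with $V=\{1,\dots,N\}$, the graph state $|\phi^G\rangle$ is the unique $N$-qubit state with $S_i^G|\phi^G\rangle=|\phi^G\rangle$ for all $i$. For a vertex $r$ of $H$ define the operator $$I_r^{H*}=\sqrt2\,n_{\max}(H)\,S_r^H+\sqrt2\sum_{i\in\mathcal N_r^H}S_i^H+\sum_{i\in V(H)\setminus\overline{\mathcal N_r^H}}S_i^H .$$ For a set $\mathcal L\subseteq\{1,\dots,N\}$ of lost qubits, $G'=G[V\setminus\mathcal L]$ is the induced subgraph on $V\setminus\mathcal L$ (vertices keep their labels; its operators act as identity on qubits in $\mathcal L$), and the post-loss state is the $N$-qubit state $\rho=\mathrm{Tr}_{\mathcal L}\big(|\phi^G\rangle\langle\phi^G|\big)\otimes\bigotimes_{l\in\mathcal L}|0\rangle\langle0|_l$. $\langle A\rangle_\rho=\mathrm{Tr}(A\rho)$. *)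

(* Defs.v *)
(* operators on N qubits are complex (algC) matrices of size 2^N,
   with rows/columns indexed (via enum_val) by bit strings {ffun 'I_N -> bool}. *)
From HB Require Import structures.
From mathcomp Require Import all_boot all_order all_algebra all_field.
Set Implicit Arguments. Unset Strict Implicit. Unset Printing Implicit Defensive.
Import Order.TTheory GRing.Theory Num.Theory.
Local Open Scope ring_scope.

Definition bits (N : nat) := {ffun 'I_N -> bool}.
Definition qdim (N : nat) : nat := #|{: bits N}|.
Definition lab {N : nat} (a : 'I_(qdim N)) : bits N := enum_val a.
Definition ind {N : nat} (x : bits N) : 'I_(qdim N) := enum_rank x.

Definition op (N : nat) := 'M[algC]_(qdim N).

Definition flip {N : nat} (i : 'I_N) (x : bits N) : bits N :=
  [ffun j => if j == i then ~~ x j else x j].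

Definition PX {N : nat} (i : 'I_N) : op N :=
  \matrix_(a, b) ((lab a == flip i (lab b))%:R).
Definition PZ {N : nat} (i : 'I_N) : op N :=
  \matrix_(a, b) ((a == b)%:R * (-1) ^+ (lab b i)).

Definition opprod {N : nat} (S : {set 'I_N}) (F : 'I_N -> op N) : op N :=
  \big[mulmx/1%:M]_(j in S) F j.

(* A simple graph H with vertex set Vs ⊆ {qubits} and adjacency e
   (e symmetric, irreflexive); the edges of H are the e-edges inside Vs. *)
Definition nbhd {N : nat} (Vs : {set 'I_N}) (e : rel 'I_N) (i : 'I_N) : {set 'I_N} :=
  [set j in Vs | e i j].
Definition cnbhd {N : nat} (Vs : {set 'I_N}) (e : rel 'I_N) (i : 'I_N) : {set 'I_N} :=
  i |: nbhd Vs e i.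
Definition nmax {N : nat} (Vs : {set 'I_N}) (e : rel 'I_N) : nat :=
  \max_(i in Vs) #|nbhd Vs e i|.

Definition stab {N : nat} (Vs : {set 'I_N}) (e : rel 'I_N) (i : 'I_N) : op N :=
  PX i *m opprod (nbhd Vs e i) PZ.

Definition Istar {N : nat} (Vs : {set 'I_N}) (e : rel 'I_N) (r : 'I_N) : op N :=
  (sqrtC 2 * (nmax Vs e)%:R) *: stab Vs e r
  + sqrtC 2 *: (\sum_(i in nbhd Vs e r) stab Vs e i)
  + \sum_(i in Vs :\: cnbhd Vs e r) stab Vs e i.

Definition normalized {N : nat} (psi : 'cV[algC]_(qdim N)) : Prop :=
  \sum_a `|psi a 0| ^+ 2 = 1.

(* post-loss state Tr_L(|psi><psi|) ⊗ |0><0|_L, written out entrywise *)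
Definition merge {N : nat} (L : {set 'I_N}) (x z : bits N) : bits N :=
  [ffun i => if i \in L then z i else x i].
Definition postloss {N : nat} (L : {set 'I_N}) (psi : 'cV[algC]_(qdim N)) : op N :=
  \matrix_(a, b)
    (([forall l in L, ~~ lab a l] && [forall l in L, ~~ lab b l])%:R *
     \sum_(z : bits N | [forall i in ~: L, ~~ z i])
        psi (ind (merge L (lab a) z)) 0 * (psi (ind (merge L (lab b) z)) 0)^*).

Definition expect {N : nat} (A rho : op N) : algC := \tr (A *m rho).

(* Main.v *)
Require Import Defs.
From HB Require Import structures.
From mathcomp Require Import all_boot all_order all_algebra all_field.
From mathcomp Require Import ring.
Import Order.TTheory GRing.Theory Num.Theory.
Local Open Scope ring_scope.
Set Implicit Arguments. Unset Strict Implicit. Unset Printing Implicit Defensive.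

Definition sg N (S : {set 'I_N}) (x : bits N) : algC := \prod_(j in S) (-1) ^+ (x j).
Definition dg N (g : bits N -> algC) : op N := \matrix_(a, b) ((a == b)%:R * g (lab b)).
Definition pm N (i : 'I_N) (S : {set 'I_N}) : op N :=
  \matrix_(a, b) ((lab a == flip i (lab b))%:R * sg S (lab b)).

Lemma sum_delta N (F : 'I_(qdim N) -> algC) b :
  \sum_c F c * (c == b)%:R = F b.
Proof.
rewrite (bigD1 b) //= eqxx mulr1 big1 ?addr0 // => c /negbTE ->; by rewrite mulr0.
Qed.

Lemma sum_deltal N (F : 'I_(qdim N) -> algC) b :
  \sum_c (b == c)%:R * F c = F b.
Proof.
rewrite (bigD1 b) //= eqxx mul1r big1 ?addr0 // => c; rewrite eq_sym => /negbTE ->; by rewrite mul0r.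
Qed.

Lemma PZ_dg N (i : 'I_N) g : PZ i *m dg g = dg (fun x => (-1) ^+ (x i) * g x).
Proof.
apply/matrixP => a b; rewrite !mxE.
under eq_bigr => c _ do rewrite !mxE mulrA.
rewrite (bigD1 a) //= eqxx mul1r big1 ?addr0; last first.
  by move=> c; rewrite eq_sym => /negbTE ->; rewrite !mul0r.
case: (eqVneq a b) => [->|_] /=; first by rewrite mulr1 mul1r.
by rewrite mulr0 !mul0r.
Qed.

Lemma dg_ext N (g h : bits N -> algC) : (forall x, g x = h x) -> dg g = dg h.
Proof. by move=> E; apply/matrixP => a b; rewrite !mxE E. Qed.

Lemma opprod_dg N (S : {set 'I_N}) : opprod S PZ = dg (sg S).
Proof.
rewrite /opprod /sg /dg.
have -> : \matrix_(a, b) ((a == b)%:R * \prod_(j in S) (-1) ^+ lab b j)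
  = dg (fun x => \prod_(j in S) (-1) ^+ x j) by [].
elim: (index_enum _) => [|j r IH].
  rewrite big_nil; apply/matrixP => a b; rewrite !mxE big_nil mulr1 //.
rewrite (@dg_ext _ _ (fun x => if j \in S then (-1) ^+ x j * \prod_(j0 <- r | j0 \in S) (-1) ^+ x j0
            else \prod_(j0 <- r | j0 \in S) (-1) ^+ x j0)); last by move=> x; rewrite big_cons.
rewrite big_cons; case: (j \in S); last by rewrite IH.
by rewrite IH PZ_dg.
Qed.


Lemma stab_pm N (Vs : {set 'I_N}) e i : stab Vs e i = pm i (nbhd Vs e i).
Proof.
rewrite /stab opprod_dg; apply/matrixP => a b; rewrite !mxE.
under eq_bigr => c _ do rewrite !mxE mulrA.
by rewrite -big_distrl /= (sum_delta (fun c => (lab a == flip i (lab c))%:R)).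
Qed.


Section B.
Variable N : nat.
Implicit Types (x y u : bits N) (S L : {set 'I_N}) (i l : 'I_N).

Lemma flipK i : involutive (@flip N i).
Proof. by move=> x; apply/ffunP => j; rewrite !ffunE; case: eqP => // ->; rewrite negbK. Qed.

Lemma flipC i l x : flip i (flip l x) = flip l (flip i x).
Proof.
apply/ffunP => j; rewrite !ffunE.
by case: (j == i); case: (j == l).
Qed.

Lemma flip_ne i l x : l != i -> flip i x l = x l.
Proof. by move=> H; rewrite ffunE (negbTE H). Qed.

Lemma flip_eq i x : flip i x i = ~~ x i.
Proof. by rewrite ffunE eqxx. Qed.

Lemma sg_flip_notin S l x : l \notin S -> sg S (flip l x) = sg S x.
Proof.
move=> H; apply: eq_bigr => j jS; rewrite flip_ne //.
by apply: contraNneq H => <-.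
Qed.

Lemma sg_flip_in S l x : l \in S -> sg S (flip l x) = - sg S x.
Proof.
move=> H; rewrite /sg !(bigD1 l H) /= flip_eq.
rewrite (eq_bigr (fun j => (-1) ^+ x j)); last first.
  by move=> j /andP[_ jl]; rewrite flip_ne.
by case: (x l); rewrite /= ?expr0 ?expr1 ?mulN1r ?mul1r ?opprK.
Qed.

Lemma sg_sq S x : sg S x * sg S x = 1.
Proof.
rewrite /sg -big_split /= big1 // => j _.
by case: (x j); rewrite /= ?expr0 ?expr1 ?mulr1 ?mulrNN ?mulr1.
Qed.

Lemma sg_conj S x : (sg S x)^* = sg S x.
Proof.
rewrite /sg rmorph_prod; apply: eq_bigr => j _.
by case: (x j); rewrite /= ?expr0 ?expr1 ?rmorph1 ?rmorphN1.
Qed.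

Lemma lab_ind x : lab (ind x) = x.
Proof. exact: enum_rankK. Qed.

Lemma ind_lab (a : 'I_(qdim N)) : ind (lab a) = a.
Proof. exact: enum_valK. Qed.

Lemma lab_eq (a : 'I_(qdim N)) x : (lab a == x) = (a == ind x).
Proof.
by apply/eqP/eqP => [<-|->]; rewrite ?ind_lab ?lab_ind.
Qed.

Lemma sum_bits (F : 'I_(qdim N) -> algC) : \sum_a F a = \sum_(x : bits N) F (ind x).
Proof.
by rewrite (reindex (@ind N)) //; exists (@lab N) => x _; rewrite ?lab_ind ?ind_lab.
Qed.

Lemma sum_flip i (F : bits N -> algC) : \sum_x F x = \sum_x F (flip i x).
Proof.
by rewrite (reindex (flip i)) //; exists (flip i) => x _; rewrite flipK.
Qed.

Definition proj1b L (u : bits N) : bits N := [ffun j => if j \in L then false else u j].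
Definition proj2b L (u : bits N) : bits N := [ffun j => if j \in L then u j else false].

Lemma merge_sum L (H : bits N -> algC) :
  \sum_(y : bits N) ([forall l in L, ~~ y l])%:R *
     \sum_(z : bits N | [forall i in ~: L, ~~ z i]) H (Defs.merge L y z) = \sum_u H u.
Proof.
rewrite (eq_bigr (fun y : bits N => \sum_(z : bits N | [forall i in ~: L, ~~ z i])
     ([forall l in L, ~~ y l])%:R * H (Defs.merge L y z))); last by move=> y _; rewrite big_distrr.
rewrite (bigID (fun y => [forall l in L, ~~ y l])) /=.
rewrite [X in _ + X]big1 ?addr0; last first.
  by move=> y /negbTE ->; rewrite big1 // => z _; rewrite mul0r.
rewrite (eq_bigr (fun y : bits N => \sum_(z : bits N | [forall i in ~: L, ~~ z i]) H (Defs.merge L y z)));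
  last by move=> y ->; apply: eq_bigr => z _; rewrite mul1r.
rewrite pair_big_dep /=.
rewrite (reindex_onto (fun u => (proj1b L u, proj2b L u)) (fun p => Defs.merge L p.1 p.2)) /=.
  apply: eq_big => u.
    apply/andP; split.
      apply/andP; split; apply/forallP => j; apply/implyP => Hj; rewrite ffunE.
        by rewrite Hj.
      by move: Hj; rewrite in_setC => /negbTE ->.
    apply/eqP/ffunP => j; rewrite !ffunE; by case: (j \in L).
  move=> _; congr H; apply/ffunP => j; rewrite !ffunE; by case: (j \in L).
move=> [y z] /andP[/forallP Hy /forallP Hz] /=.
congr pair; apply/ffunP => j; rewrite !ffunE; case: (boolP (j \in L)) => Hj //.
  by move: (Hy j); rewrite Hj /= => /negbTE.
by move: (Hz j); rewrite in_setC Hj /= => /negbTE.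
Qed.

End B.


Lemma sum_deltar N (F : 'I_(qdim N) -> algC) b :
  \sum_c (c == b)%:R * F c = F b.
Proof.
rewrite (bigD1 b) //= eqxx mul1r big1 ?addr0 // => c /negbTE ->; by rewrite mul0r.
Qed.

Lemma merge_flip N (L : {set 'I_N}) i y z : i \notin L ->
  Defs.merge L (flip i y) z = flip i (Defs.merge L y z).
Proof.
move=> iL; apply/ffunP => j; rewrite !ffunE; case: (boolP (j \in L)) => // jL.
by have /negbTE -> : j != i by apply: contraNneq iL => <-.
Qed.

Lemma sg_zero N (L S : {set 'I_N}) (y z : bits N) : [forall l in L, ~~ y l] ->
  sg S y = sg (S :\: L) (Defs.merge L y z).
Proof.
move=> /forallP Hy; rewrite /sg (big_setID L) /= big1 ?mul1r; last first.
  move=> j; rewrite inE => /andP[_ jL]; move: (Hy j); rewrite jL /= => /negbTE ->.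
  by rewrite expr0.
apply: eq_bigr => j; rewrite inE => /andP[jL _]; rewrite ffunE (negbTE jL) //.
Qed.

Lemma expect_pm N (L : {set 'I_N}) (psi : 'cV[algC]_(qdim N)) i S :
 expect (pm i S) (postloss L psi) =
 if i \in L then 0 else
   \sum_(u : bits N) sg (S :\: L) u * psi (ind u) 0 * (psi (ind (flip i u)) 0)^*.
Proof.
rewrite /expect /mxtrace.
under eq_bigr => a _ do rewrite mxE.
rewrite exchange_big /=.
under eq_bigr => b _ do under eq_bigr => a _ do rewrite mxE lab_eq -mulrA.
under eq_bigr => b _ do rewrite sum_deltar.
rewrite sum_bits.
under eq_bigr => y _ do rewrite mxE !lab_ind.
case: ifP => iL.
  apply: big1 => y _; case: (boolP [forall l in L, ~~ y l]) => Hy /=; last by rewrite mul0r mulr0.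
  have -> : [forall l in L, ~~ flip i y l] = false.
    apply/negbTE/forallPn; exists i; rewrite iL /= flip_eq negbK.
    by move/forallP: Hy => /(_ i); rewrite iL /= => /negbTE ->.
  by rewrite mul0r mulr0.
rewrite -(merge_sum L (fun u => sg (S :\: L) u * psi (ind u) 0 * (psi (ind (flip i u)) 0)^*)).
apply: eq_bigr => y _.
have -> : [forall l in L, ~~ flip i y l] = [forall l in L, ~~ y l].
  apply: eq_forallb => l; case lL: (l \in L) => //=; rewrite flip_ne //.
  by apply: contraFneq iL => <-.
rewrite andbb; case: (boolP [forall l in L, ~~ y l]) => Hy /=; last by rewrite !mul0r mulr0.
rewrite !mul1r big_distrr; apply: eq_bigr => z _.
by rewrite merge_flip ?iL // (sg_zero S z Hy) /= mulrA.
Qed.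


Section C.
Variable N : nat.
Variable psi : 'cV[algC]_(qdim N).
Let f (x : bits N) := psi (ind x) 0.
Definition Ev (i : 'I_N) (S : {set 'I_N}) :=
  \sum_(u : bits N) sg S u * psi (ind u) 0 * (psi (ind (flip i u)) 0)^*.

Lemma flip_eqb i (x w : bits N) : (x == flip i w) = (flip i x == w).
Proof. by apply/eqP/eqP => [->|<-]; rewrite flipK. Qed.

Lemma stab_rel i S : pm i S *m psi = psi -> i \notin S ->
  forall x, psi (ind (flip i x)) 0 = sg S x * psi (ind x) 0.
Proof.
move=> H iS x.
have := congr1 (fun M : 'cV[algC]_(qdim N) => M (ind x) 0) H => /=.
rewrite mxE.
under eq_bigr => b _ do rewrite mxE lab_ind flip_eqb eq_sym lab_eq -mulrA.
rewrite sum_deltar lab_ind sg_flip_notin // => <-.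
by rewrite mulrA sg_sq mul1r.
Qed.

Lemma Ev_one i S : pm i S *m psi = psi -> i \notin S -> normalized psi -> Ev i S = 1.
Proof.
move=> H iS Hn; rewrite /Ev -Hn /normalized sum_bits; apply: eq_bigr => u _.
rewrite (stab_rel H iS) rmorphM /= sg_conj normCK.
by rewrite mulrACA sg_sq mul1r.
Qed.

Lemma Ev_zero (i l : 'I_N) (S Sl : {set 'I_N}) : pm l Sl *m psi = psi -> l \notin Sl -> i != l ->
  l \notin S -> i \in Sl -> Ev i S = 0.
Proof.
move=> H lSl il lS iSl; apply/eqP; rewrite -eqNr; apply/eqP.
rewrite /Ev {2}(sum_flip l) -sumrN; apply: eq_bigr => u _.
rewrite sg_flip_notin // flipC !(stab_rel H lSl) sg_flip_in //.
rewrite !rmorphM /= rmorphN /= sg_conj.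
set a := sg S u; set b := sg Sl u; set p := psi _ _; set q := (psi _ _)^*.
have E : b * b = 1 by rewrite sg_sq.
transitivity (- (a * p * q) * (b * b)); first by rewrite E mulr1.
ring.
Qed.
End C.


Lemma expectD N (A B rho : op N) : expect (A + B) rho = expect A rho + expect B rho.
Proof. by rewrite /expect mulmxDl mxtraceD. Qed.
Lemma expectZ N c (A rho : op N) : expect (c *: A) rho = c * expect A rho.
Proof. by rewrite /expect -scalemxAl mxtraceZ. Qed.
Lemma expect_sum N (P : pred 'I_N) (F : 'I_N -> op N) rho :
  expect (\sum_(i | P i) F i) rho = \sum_(i | P i) expect (F i) rho.
Proof.
apply: (big_ind2 (fun A x => expect A rho = x)).
- by rewrite /expect mul0mx mxtrace0.
- by move=> A x B y <- <-; rewrite expectD.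
- by [].
Qed.

Lemma count_notin N (A X : {set 'I_N}) :
  \sum_(i in A) ((i \notin X)%:R : algC) = (#|A :\: X|)%:R.
Proof.
rewrite -sum1_card natr_sum (bigID (fun i => i \in X)) /= big1 ?add0r; last first.
  by move=> i /andP[_ ->].
by apply: eq_big => [i|i /andP[_ ->]]; rewrite // inE andbC.
Qed.

Section M.
Variables (N : nat) (e : rel 'I_N) (He_sym : symmetric e) (He_irr : irreflexive e)
  (L : {set 'I_N}) (psi : 'cV[algC]_(qdim N)) (Hnorm : normalized psi)
  (Hstab : forall i : 'I_N, stab [set: 'I_N] e i *m psi = psi).

Let G := [set: 'I_N].
Let lostN := \bigcup_(l in L) cnbhd G e l.

Lemma in_cnbhd Vs i j : (j \in cnbhd Vs e i) = (j == i) || (j \in Vs) && e i j.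
Proof. by rewrite !inE. Qed.

Lemma L_lost l : l \in L -> l \in lostN.
Proof. by move=> lL; apply/bigcupP; exists l => //; rewrite in_cnbhd eqxx. Qed.

Lemma lostP i : reflect (exists2 l, l \in L & (i == l) || e l i) (i \in lostN).
Proof.
apply: (iffP bigcupP) => [[l lL H]|[l lL H]]; exists l => //;
  by move: H; rewrite in_cnbhd in_setT.
Qed.

Lemma Ev_val i : i \notin L ->
  Ev psi i (nbhd G e i :\: L) = (i \notin lostN)%:R.
Proof.
move=> iL; case: (lostP i) => [[l lL /orP[/eqP il|eli]]|nl] /=.
- by move: iL; rewrite il lL.
- have il : i != l by apply: contraNneq iL => ->.
  apply: (@Ev_zero _ psi i l _ (nbhd G e l)).
  + by rewrite -stab_pm; exact: Hstab.
  + by rewrite inE He_irr andbF.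
  + exact: il.
  + by rewrite inE lL.
  + by rewrite inE in_setT eli.
- have -> : nbhd G e i :\: L = nbhd G e i.
    apply/setP => j; rewrite !inE; case: (boolP (j \in L)) => //= jL.
    case eij: (e i j) => //; case: nl; exists j => //.
    by rewrite He_sym eij orbT.
  apply: Ev_one => //; first by rewrite -stab_pm; exact: Hstab.
  by rewrite inE He_irr andbF.
Qed.

Lemma EG i : expect (stab G e i) (postloss L psi) = (i \notin lostN)%:R.
Proof.
rewrite stab_pm expect_pm; case: ifP => iL.
  by rewrite L_lost.
by rewrite -Ev_val ?iL.
Qed.

Lemma EG' i : i \notin L -> expect (stab (~: L) e i) (postloss L psi) = (i \notin lostN)%:R.
Proof.
move=> iL; rewrite stab_pm expect_pm (negbTE iL) -Ev_val //.
congr Ev; apply/setP => j; rewrite !inE; by case: (j \in L).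
Qed.

End M.

Unset Implicit Arguments. Set Strict Implicit.

Lemma r_lost N (e : rel 'I_N) (He_sym : symmetric e) (L : {set 'I_N}) r :
  (r \in \bigcup_(l in L) cnbhd [set: 'I_N] e l) = (cnbhd [set: 'I_N] e r :&: L != set0).
Proof.
apply/bigcupP/set0Pn => [[l lL]|[l]].
  rewrite !inE => H; exists l; rewrite !inE lL andbT.
  case/orP: H => [/eqP ->|/andP[_ H]]; first by rewrite eqxx.
  by rewrite He_sym H orbT.
rewrite !inE => /andP[H lL]; exists l => //; rewrite !inE.
case/orP: H => [/eqP ->|/andP[_ H]]; first by rewrite eqxx.
by rewrite He_sym H orbT.
Qed.

Lemma nmax_eq N (e : rel 'I_N) (He_sym : symmetric e) (L : {set 'I_N}) r :
  #|nbhd [set: 'I_N] e r| = nmax [set: 'I_N] e -> r \notin L ->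
  cnbhd [set: 'I_N] e r :&: L == set0 -> nmax (~: L) e = nmax [set: 'I_N] e.
Proof.
move=> Hroot rL /eqP H0.
have Hn : nbhd (~: L) e r = nbhd [set: 'I_N] e r.
  apply/setP => j; rewrite !inE; case jL: (j \in L) => //=.
  case erj: (e r j) => //.
  have : j \in cnbhd [set: 'I_N] e r :&: L by rewrite !inE erj jL orbT.
  by rewrite H0 inE.
apply/eqP; rewrite eqn_leq; apply/andP; split.
  apply/bigmax_leqP => i _.
  apply: leq_trans (leq_bigmax_cond i (in_setT i)).
  by apply: subset_leq_card; apply/subsetP => j; rewrite !inE => /andP[_ ->].
rewrite -Hroot -Hn.
by apply: (leq_bigmax_cond r); rewrite inE.
Qed.

Theorem theorem1 (N : nat) (e : rel 'I_N) (He_sym : symmetric e) (He_irr : irreflexive e)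
  (L : {set 'I_N}) (psi : 'cV[algC]_(qdim N))
  (Hnorm : normalized psi)
  (Hstab : forall i : 'I_N, stab [set: 'I_N] e i *m psi = psi)
  (r : 'I_N) (Hroot : #|nbhd [set: 'I_N] e r| = nmax [set: 'I_N] e)
  (HrL : r \notin L) :
  let G := [set: 'I_N] in
  let rho := postloss L psi in
  let lostN := \bigcup_(l in L) cnbhd G e l in
  let W := nbhd G e r :\: lostN in
  let T := ~: (lostN :|: cnbhd G e r) in
  expect (Istar G e r) rho = expect (Istar (~: L) e r) rho /\
  expect (Istar (~: L) e r) rho =
    (if cnbhd G e r :&: L == set0
     then sqrtC 2 * (nmax G e)%:R + sqrtC 2 * #|W|%:R + #|T|%:R
     else sqrtC 2 * #|W|%:R + #|T|%:R).
Proof.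
cbv zeta.
set X := \bigcup_(l in L) cnbhd [set: 'I_N] e l.
have XL : forall j, j \notin X -> j \notin L.
  by move=> j; apply: contra => jL; exact: L_lost.
have E1 : expect (Istar [set: 'I_N] e r) (postloss L psi) =
   sqrtC 2 * (nmax [set: 'I_N] e)%:R * (r \notin X)%:R
   + sqrtC 2 * #|nbhd [set: 'I_N] e r :\: X|%:R + #|~: (X :|: cnbhd [set: 'I_N] e r)|%:R.
  rewrite /Istar !expectD !expectZ !expect_sum.
  under eq_bigr => i _ do rewrite (EG He_sym He_irr L Hnorm Hstab).
  under [X in _ + X = _]eq_bigr => i _ do rewrite (EG He_sym He_irr L Hnorm Hstab).
  rewrite (EG He_sym He_irr L Hnorm Hstab) !count_notin.
  rewrite -/X.
  have -> : [set: 'I_N] :\: cnbhd [set: 'I_N] e r :\: X = ~: (X :|: cnbhd [set: 'I_N] e r).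
    apply/setP => j; rewrite !inE.
    by case: (j \in X); case: (j == r); case: (e r j).
  by [].
have E2 : expect (Istar (~: L) e r) (postloss L psi) =
   sqrtC 2 * (nmax (~: L) e)%:R * (r \notin X)%:R
   + sqrtC 2 * #|nbhd [set: 'I_N] e r :\: X|%:R + #|~: (X :|: cnbhd [set: 'I_N] e r)|%:R.
  rewrite /Istar !expectD !expectZ !expect_sum.
  rewrite (eq_bigr (fun i => (i \notin X)%:R)); last first.
    by move=> i; rewrite inE => /andP[iL _]; rewrite (EG' He_sym He_irr (L:=L) Hnorm Hstab) // -in_setC.
  rewrite [X in _ + X = _](eq_bigr (fun i => (i \notin X)%:R)); last first.
    by move=> i; rewrite !inE => /andP[_ iL]; rewrite (EG' He_sym He_irr (L:=L) Hnorm Hstab).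
  rewrite (EG' He_sym He_irr (L:=L) Hnorm Hstab) // !count_notin -/X.
  have -> : nbhd (~: L) e r :\: X = nbhd [set: 'I_N] e r :\: X.
    apply/setP => j; rewrite !inE; case: (boolP (j \in X)) => //= jX.
    by have /negbTE -> := XL j jX.
  have -> : ~: L :\: cnbhd (~: L) e r :\: X = ~: (X :|: cnbhd [set: 'I_N] e r).
    apply/setP => j; rewrite !inE; case: (boolP (j \in X)) => //= jX.
    by have /negbTE -> := XL j jX; rewrite /= andbT.
  by [].
rewrite E1 E2 r_lost //.
case: ifP => H0 /=.
  by rewrite (@nmax_eq _ _ He_sym _ _ Hroot HrL H0) !mulr1.
by rewrite !mulr0 !add0r.
Qed.
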